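(* Let $\mathbf{X}\subseteq\mathbb{R}_+^n$ be an interval and $\mathrm{IC}(\mathbf{a}_0,\dots,\mathbf{a}_{n-1})$ an interval circulant matrix containing $\hat A$. Then $\mathrm{IC}(\mathbf{a}_0,\dots,\mathbf{a}_{n-1})$ is weakly tolerance $\mathbf{X}$-robust, i.e. there exist $A\in\mathrm{IC}(\mathbf{a}_0,\dots,\mathbf{a}_{n-1})$ and $x\in\mathbf{X}$ with $x\in\mathrm{Attr}(A)$, if and only if the system $\lambda(\hat A)\hat A^{n^2}\otimes x=\hat A^{n^2+1}\otimes x$ has a solution $x\in\mathbf{X}$.
   Context: Max algebra on $\mathbb{R}_+$: $\oplus=\max$, ordinary product, $A^t$ max-algebraic power; $\lambda(A)$ greatest max-algebraic eigenvalue (maximum cycle geometric mean); $\mathrm{Attr}(A)=\{x\in\mathbb{R}_+^n: A^{t+1}\otimes x=\lambda(A)A^t\otimes x\text{ for some }t\ge0\}$. An interval $\mathbf{X}=\prod_i\mathbf{X}_i$ has each $\mathbf{X}_i\subseteq\mathbb{R}_+$ nonempty of one of the forms $[\underline{x}_i,\overline{x}_i]$, $(\underline{x}_i,\overline{x}_i)$, $(\underline{x}_i,\overline{x}_i]$, $[\underline{x}_i,\overline{x}_i)$. $\mathrm{Circ}(a_0,\dots,a_{n-1})$ has entries $A_{i,j}=a_t$, $t\equiv j-i\pmod n$; $\mathrm{IC}(\mathbf{a}_0,\dots,\mathbf{a}_{n-1})$ is the set of all $\mathrm{Circ}(a_0,\dots,a_{n-1})$ with $a_t\in\mathbf{a}_t$,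 each $\mathbf{a}_t\subseteq\mathbb{R}_+$ a nonempty interval of one of the four forms with endpoints $\underline a_t\le\overline a_t$. $\underline a=\max_k\underline a_k$, $\hat A=\mathrm{Circ}(\hat a_0,\dots,\hat a_{n-1})$, $\hat a_i=\min\{\underline a,\overline a_i\}$. *)

(* Defs.v *)
From Stdlib Require Import Reals List Arith.
Import ListNotations.
Open Scope R_scope.

(* Matrices and vectors of dimension n are functions on indices; only the
   indices < n are relevant. *)
Definition mat := nat -> nat -> R.
Definition vec := nat -> R.

(* max-algebra sum of a finite list of nonnegative reals (0 = max-neutral on R_+) *)
Definition rmaxl (l : list R) : R := fold_right Rmax 0 l.

Definition mmul (n : nat) (A B : mat) : mat :=
  fun i j => rmaxl (map (fun k => A i k * B k j) (seq 0 n)).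
Definition mvec (n : nat) (A : mat) (x : vec) : vec :=
  fun i => rmaxl (map (fun k => A i k * x k) (seq 0 n)).

Definition mid : mat := fun i j => if Nat.eqb i j then 1 else 0.

Fixpoint mpow (n : nat) (A : mat) (t : nat) : mat :=
  match t with
  | O => mid
  | S t' => mmul n A (mpow n A t')
  end.

Fixpoint all_lists (n k : nat) : list (list nat) :=
  match k with
  | O => [[]]
  | S k' => flat_map (fun i => map (fun c => i :: c) (all_lists n k')) (seq 0 n)
  end.

Definition cycle_weight (A : mat) (c : list nat) : R :=
  let k := length c in
  fold_right Rmult 1
    (map (fun j => A (nth j c 0%nat) (nth ((j + 1) mod k) c 0%nat)) (seq 0 k)).

Definition geo_mean (p : R) (k : nat) : R :=
  if Rle_dec p 0 then 0 else Rpower p (/ INR k).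

Definition lambda (n : nat) (A : mat) : R :=
  rmaxl (flat_map (fun k => map (fun c => geo_mean (cycle_weight A c) k)
                                (all_lists n k))
                  (seq 1 n)).

Definition nonneg_vec (n : nat) (x : vec) : Prop := forall i, (i < n)%nat -> 0 <= x i.

Definition Attr (n : nat) (A : mat) (x : vec) : Prop :=
  nonneg_vec n x /\
  exists t : nat, forall i, (i < n)%nat ->
    mvec n (mpow n A (S t)) x i = lambda n A * mvec n (mpow n A t) x i.

(* An interval in R_+ of one of the four forms [l,u], (l,u), (l,u], [l,u):
   lc/rc say whether the left/right endpoint is included. *)
Record itv := Itv { lo : R; hi : R; lc : bool; rc : bool }.

Definition in_itv (I : itv) (x : R) : Prop :=
  (if lc I then lo I <= x else lo I < x) /\ (if rc I then x <= hi I else x < hi I).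

Definition itv_ok (I : itv) : Prop :=
  0 <= lo I /\ lo I <= hi I /\ exists x, in_itv I x.

Definition in_box (n : nat) (X : nat -> itv) (x : vec) : Prop :=
  forall i, (i < n)%nat -> in_itv (X i) (x i).

Definition Circ (n : nat) (a : nat -> R) : mat :=
  fun i j => a ((j + n - i) mod n)%nat.

Definition lo_max (n : nat) (ia : nat -> itv) : R :=
  rmaxl (map (fun k => lo (ia k)) (seq 0 n)).
Definition hat_a (n : nat) (ia : nat -> itv) : nat -> R :=
  fun i => Rmin (lo_max n ia) (hi (ia i)).
Definition hatA (n : nat) (ia : nat -> itv) : mat := Circ n (hat_a n ia).

Definition weakly_tolerance_robust (n : nat) (ia : nat -> itv) (X : nat -> itv) : Prop :=
  exists a : nat -> R,
    (forall t, (t < n)%nat -> in_itv (ia t) (a t)) /\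
    exists x : vec, in_box n X x /\ Attr n (Circ n a) x.

(* Main.v *)
Require Import Defs.
From Stdlib Require Import Reals List Arith ZArith Lia Lra Classical.
Import ListNotations.
Open Scope R_scope.

Lemma rmaxl_nonneg l : 0 <= rmaxl l.
Proof. induction l; simpl; [lra|]. apply Rle_trans with (rmaxl l); auto; apply Rmax_r. Qed.

Lemma rmaxl_ge' (l : list R) y : In y l -> y <= rmaxl l.
Proof.
  induction l; simpl; [tauto|]. intros [->|H].
  - apply Rmax_l.
  - apply Rle_trans with (rmaxl l); auto; apply Rmax_r.
Qed.

Lemma rmaxl_le' (l : list R) M : 0 <= M -> (forall y, In y l -> y <= M) -> rmaxl l <= M.
Proof.
  intros H0; induction l; simpl; intros H; [lra|].
  apply Rmax_lub; auto.
Qed.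

Lemma rmaxl_ge {A} (f : A -> R) l y : In y l -> f y <= rmaxl (map f l).
Proof. intros; apply rmaxl_ge'; apply in_map; auto. Qed.

Lemma rmaxl_le {A} (f : A -> R) l M : 0 <= M -> (forall y, In y l -> f y <= M) -> rmaxl (map f l) <= M.
Proof. intros H0 H; apply rmaxl_le'; auto. intros y Hy; apply in_map_iff in Hy as [z [<- Hz]]; auto. Qed.

Lemma rmaxl_attain {A} (f : A -> R) l : l <> [] -> (forall y, In y l -> 0 <= f y) ->
  exists y, In y l /\ rmaxl (map f l) = f y.
Proof.
  induction l as [|a l IH]; [tauto|]. intros _ H. simpl.
  destruct l as [|b l'].
  - exists a; split; [left; auto|]. simpl. apply Rmax_left. apply H; left; auto.
  - destruct IH as [y [Hy Hr]]; [discriminate| intros; apply H; right; auto|].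
    rewrite Hr. destruct (Rle_dec (f a) (f y)).
    + exists y; split; [right; auto| apply Rmax_right; auto].
    + exists a; split; [left; auto| apply Rmax_left; lra].
Qed.

Lemma rmaxl_scal {A} (f : A -> R) l c : 0 <= c -> c * rmaxl (map f l) = rmaxl (map (fun y => c * f y) l).
Proof.
  intros Hc; induction l; simpl; [ring|]. rewrite <- IHl, <- RmaxRmult; auto.
Qed.

Lemma rmaxl_ext {A} (f g : A -> R) l : (forall y, In y l -> f y = g y) -> rmaxl (map f l) = rmaxl (map g l).
Proof. intros H; f_equal; apply map_ext_in; auto. Qed.

Lemma rmaxl_mono {A} (f g : A -> R) l : (forall y, In y l -> f y <= g y) -> rmaxl (map f l) <= rmaxl (map g l).
Proof.
  intros H. apply rmaxl_le; [apply rmaxl_nonneg|]. intros y Hy.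
  apply Rle_trans with (g y); auto. apply rmaxl_ge; auto.
Qed.

Lemma rmaxl_swap {A B} (g : A -> B -> R) l1 l2 :
  rmaxl (map (fun k => rmaxl (map (fun m => g m k) l2)) l1) =
  rmaxl (map (fun m => rmaxl (map (fun k => g m k) l1)) l2).
Proof.
  apply Rle_antisym; apply rmaxl_le; try apply rmaxl_nonneg; intros y Hy;
  apply rmaxl_le; try apply rmaxl_nonneg; intros z Hz.
  - apply Rle_trans with (rmaxl (map (fun k => g z k) l1)); [apply (rmaxl_ge (fun k => g z k)); auto|].
    apply (rmaxl_ge (fun m => rmaxl (map (fun k => g m k) l1))); auto.
  - apply Rle_trans with (rmaxl (map (fun m => g m z) l2)); [apply (rmaxl_ge (fun m => g m z)); auto|].
    apply (rmaxl_ge (fun k => rmaxl (map (fun m => g m k) l2))); auto.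
Qed.

Lemma rmaxl_flat {A B} (f : B -> R) (g : A -> list B) l :
  rmaxl (map f (flat_map g l)) = rmaxl (map (fun a => rmaxl (map f (g a))) l).
Proof.
  induction l; simpl; auto. rewrite map_app. rewrite <- IHl.
  generalize (map f (flat_map g l)); intro r.
  induction (map f (g a)); simpl.
  - symmetry; apply Rmax_right, rmaxl_nonneg.
  - rewrite IHl0. rewrite Rmax_assoc. auto.
Qed.

Lemma in_all_lists n k l : In l (all_lists n k) <-> length l = k /\ Forall (fun s => (s < n)%nat) l.
Proof.
  revert l; induction k; intros l; simpl.
  - split. intros [<-|[]]; simpl; auto. intros [H _]; destruct l; simpl in *; auto; discriminate.
  - rewrite in_flat_map. split.
    + intros [s [Hs Hl]]. apply in_map_iff in Hl as [c [<- Hc]]. apply in_seq in Hs.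
      apply IHk in Hc as [H1 H2]. simpl; split; auto. constructor; auto; lia.
    + intros [H1 H2]. destruct l as [|s c]; [discriminate|]. inversion H2; subst.
      exists s; split; [apply in_seq; lia|]. apply in_map. apply IHk. simpl in H1; split; auto.
Qed.

Definition sm (l : list nat) : nat := fold_right Nat.add 0%nat l.
Definition wt (e : nat -> R) (l : list nat) : R := fold_right (fun s r => e s * r) 1 l.
Definition P n (e : nat -> R) t (x : vec) (i : nat) : R :=
  rmaxl (map (fun l => wt e l * x ((i + sm l) mod n)%nat) (all_lists n t)).

Definition nnd n (e : nat -> R) := forall s, (s < n)%nat -> 0 <= e s.

Lemma wt_nonneg n e l : nnd n e -> Forall (fun s => (s < n)%nat) l -> 0 <= wt e l.
Proof.
  intros He; induction 1; simpl; [lra|]. apply Rmult_le_pos; auto.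
Qed.

Lemma P_nonneg n e t x i : 0 <= P n e t x i.
Proof. apply rmaxl_nonneg. Qed.

Lemma P_step n e t x i : nnd n e ->
  P n e (S t) x i = rmaxl (map (fun s => e s * P n e t x ((i + s) mod n)%nat) (seq 0 n)).
Proof.
  intros He. unfold P. simpl all_lists. rewrite rmaxl_flat.
  apply rmaxl_ext. intros s Hs. apply in_seq in Hs. rewrite rmaxl_scal by (apply He; lia).
  rewrite map_map. apply rmaxl_ext. intros l _. simpl. rewrite Rmult_assoc. f_equal. f_equal. f_equal.
  rewrite Nat.Div0.add_mod_idemp_l. f_equal. lia.
Qed.

Lemma P_mod n e t x i : P n e t x (i mod n) = P n e t x i.
Proof.
  unfold P. apply rmaxl_ext. intros. rewrite Nat.Div0.add_mod_idemp_l. auto.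
Qed.

Lemma mvec_mmul n (A M : mat) x i :
  (forall m, (m < n)%nat -> 0 <= A i m) -> (forall k, (k < n)%nat -> 0 <= x k) ->
  mvec n (mmul n A M) x i = mvec n A (mvec n M x) i.
Proof.
  intros HA Hx. unfold mvec, mmul.
  transitivity (rmaxl (map (fun k => rmaxl (map (fun m => A i m * M m k * x k) (seq 0 n))) (seq 0 n))).
  - apply rmaxl_ext. intros k Hk. apply in_seq in Hk. rewrite Rmult_comm, rmaxl_scal by (apply Hx; lia).
    apply rmaxl_ext; intros; ring.
  - rewrite (rmaxl_swap (fun m k => A i m * M m k * x k)). apply rmaxl_ext. intros m Hm. apply in_seq in Hm.
    rewrite rmaxl_scal by (apply HA; lia). apply rmaxl_ext; intros; ring.
Qed.

Lemma modL1 n i k : (i < n)%nat -> (k < n)%nat -> ((i + (k + n - i) mod n) mod n = k)%nat.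
Proof.
  intros Hi Hk. destruct (le_lt_dec i k).
  - replace (k + n - i)%nat with ((k - i) + 1 * n)%nat by lia. rewrite Nat.Div0.mod_add, (Nat.mod_small (k - i)) by lia.
    replace (i + (k - i))%nat with k by lia. apply Nat.mod_small; lia.
  - rewrite (Nat.mod_small (k + n - i)) by lia. replace (i + (k + n - i))%nat with (k + 1 * n)%nat by lia.
    rewrite Nat.Div0.mod_add. apply Nat.mod_small; lia.
Qed.

Lemma modL2 n i s : (i < n)%nat -> (s < n)%nat -> (((i + s) mod n + n - i) mod n = s)%nat.
Proof.
  intros Hi Hs. destruct (lt_dec (i + s) n).
  - rewrite (Nat.mod_small (i + s)) by lia. replace (i + s + n - i)%nat with (s + 1 * n)%nat by lia.
    rewrite Nat.Div0.mod_add. apply Nat.mod_small; lia.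
  - replace (i + s)%nat with ((i + s - n) + 1 * n)%nat by lia. rewrite Nat.Div0.mod_add, (Nat.mod_small (i + s - n)) by lia.
    replace (i + s - n + n - i)%nat with s by lia. apply Nat.mod_small; lia.
Qed.

Lemma link n a x : (0 < n)%nat -> nnd n a -> (forall k, (k < n)%nat -> 0 <= x k) ->
  forall t i, (i < n)%nat -> mvec n (mpow n (Circ n a) t) x i = P n a t x i.
Proof.
  intros Hn Ha Hx. induction t; intros i Hi.
  - simpl. unfold P. simpl. rewrite Nat.add_0_r, Nat.mod_small by auto. rewrite Rmult_1_l.
    rewrite Rmax_left by (apply Hx; auto). unfold mvec, mid.
    apply Rle_antisym.
    + apply rmaxl_le; [apply Hx; auto|]. intros k Hk. destruct (Nat.eqb_spec i k); subst; [lra|].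
      rewrite Rmult_0_l; apply Hx; auto.
    + apply Rle_trans with ((if Nat.eqb i i then 1 else 0) * x i).
      * rewrite Nat.eqb_refl; lra.
      * apply (rmaxl_ge (fun k => (if Nat.eqb i k then 1 else 0) * x k)). apply in_seq; lia.
  - simpl. rewrite mvec_mmul; auto.
    2:{ intros m Hm. unfold Circ. apply Ha. apply Nat.mod_upper_bound; lia. }
    rewrite P_step by auto. unfold mvec at 1.
    rewrite (rmaxl_ext _ (fun k => Circ n a i k * P n a t x k)).
    2:{ intros k Hk; apply in_seq in Hk. rewrite IHt by lia. auto. }
    unfold Circ. apply Rle_antisym.
    + apply rmaxl_le; [apply rmaxl_nonneg|]. intros k Hk. apply in_seq in Hk.
      set (s := ((k + n - i) mod n)%nat).
      assert (Hs : (s < n)%nat) by (apply Nat.mod_upper_bound; lia).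
      apply Rle_trans with (a s * P n a t x ((i + s) mod n)%nat); [right; f_equal; f_equal; symmetry; apply modL1; lia|].
      apply (rmaxl_ge (fun s => a s * P n a t x ((i + s) mod n)%nat)). apply in_seq; lia.
    + apply rmaxl_le; [apply rmaxl_nonneg|]. intros s Hs. apply in_seq in Hs.
      set (k := ((i + s) mod n)%nat).
      assert (Hk : (k < n)%nat) by (apply Nat.mod_upper_bound; lia).
      apply Rle_trans with (a ((k + n - i) mod n)%nat * P n a t x k); [right; f_equal; f_equal; symmetry; apply modL2; lia|].
      apply (rmaxl_ge (fun k => a ((k + n - i) mod n)%nat * P n a t x k)). apply in_seq; lia.
Qed.

Lemma prod_bound (l : list R) M : (forall y, In y l -> 0 <= y <= M) ->
  0 <= fold_right Rmult 1 l <= M ^ length l.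
Proof.
  induction l; simpl; intros H; [lra|].
  destruct (H a (or_introl eq_refl)) as [Ha1 Ha2]. destruct IHl as [H1 H2]; [intros; apply H; auto|].
  split; [apply Rmult_le_pos; auto|]. apply Rmult_le_compat; auto.
Qed.

Lemma prod_const {A} (c : R) (l : list A) : fold_right Rmult 1 (map (fun _ => c) l) = c ^ length l.
Proof. induction l; simpl; auto. rewrite IHl; auto. Qed.

Lemma geo_pow M k : 0 <= M -> (0 < k)%nat -> geo_mean (M ^ k) k = M.
Proof.
  intros HM Hk. unfold geo_mean. destruct (Rle_dec (M ^ k) 0).
  - destruct (Req_dec M 0); [lra|]. assert (0 < M ^ k) by (apply pow_lt; lra). lra.
  - assert (0 < M). { destruct (Req_dec M 0); [subst; rewrite pow_i in n by lia; lra| lra]. }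
    rewrite <- Rpower_pow by auto. rewrite Rpower_mult. rewrite Rinv_r.
    + apply Rpower_1; auto.
    + apply not_0_INR; lia.
Qed.

Lemma geo_le p M k : 0 <= M -> (0 < k)%nat -> p <= M ^ k -> geo_mean p k <= M.
Proof.
  intros HM Hk Hp. unfold geo_mean. destruct (Rle_dec p 0); auto.
  assert (0 < M). { destruct (Req_dec M 0); [subst; rewrite pow_i in Hp by lia; lra| lra]. }
  rewrite <- (geo_pow M k) by auto. unfold geo_mean. destruct (Rle_dec (M ^ k) 0).
  - assert (0 < M ^ k) by (apply pow_lt; lra). lra.
  - apply Rle_Rpower_l; [| lra]. left; apply Rinv_0_lt_compat, lt_0_INR; lia.
Qed.

Lemma modZ n a b : (0 < n)%nat -> (exists q, Z.of_nat a = (Z.of_nat b + q * Z.of_nat n)%Z) -> (a mod n = b mod n)%nat.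
Proof.
  intros Hn [q Hq]. apply Nat2Z.inj. rewrite !Nat2Z.inj_mod, Hq. apply Z.mod_add. lia.
Qed.

Lemma modZ' n a : (0 < n)%nat -> Z.of_nat (a mod n) = (Z.of_nat a - Z.of_nat n * Z.of_nat (a / n))%Z.
Proof.
  intros Hn. pose proof (Nat.div_mod_eq a n). lia.
Qed.

Lemma modL3 n u s : (0 < n)%nat -> (s < n)%nat -> (((u + s) mod n + n - u mod n) mod n = s)%nat.
Proof.
  intros Hn Hs. rewrite <- (Nat.mod_small s n) at 2 by auto. apply modZ; auto.
  pose proof (Nat.mod_upper_bound u n ltac:(lia)).
  exists (1 - Z.of_nat ((u + s) / n) + Z.of_nat (u / n))%Z.
  rewrite !Nat2Z.inj_sub by lia. rewrite !Nat2Z.inj_add, !modZ' by auto. rewrite Nat2Z.inj_add. ring.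
Qed.

Definition amax n (a : nat -> R) := rmaxl (map a (seq 0 n)).

Lemma lambda_circ n a : (0 < n)%nat -> nnd n a -> lambda n (Circ n a) = amax n a.
Proof.
  intros Hn Ha. assert (HM : 0 <= amax n a) by apply rmaxl_nonneg.
  assert (Hc : forall u v, 0 <= Circ n a u v <= amax n a).
  { intros u v. unfold Circ. assert (((v + n - u) mod n < n)%nat) by (apply Nat.mod_upper_bound; lia).
    split; [apply Ha; auto|]. apply rmaxl_ge. apply in_seq; lia. }
  apply Rle_antisym.
  - unfold lambda. apply rmaxl_le'; auto. intros y Hy. apply in_flat_map in Hy as [k [Hk Hy]].
    apply in_seq in Hk. apply in_map_iff in Hy as [c [<- Hc']]. apply in_all_lists in Hc' as [Hl _].
    apply geo_le; auto; [lia|]. unfold cycle_weight. rewrite Hl.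
    pose proof (prod_bound (map (fun j => Circ n a (nth j c 0%nat) (nth ((j + 1) mod k) c 0%nat)) (seq 0 k)) (amax n a)) as Hb.
    rewrite length_map, length_seq in Hb. apply Hb. intros y Hy. apply in_map_iff in Hy as [j [<- _]]. apply Hc.
  - destruct (rmaxl_attain a (seq 0 n)) as [s [Hs Hs']].
    { destruct n; [lia| discriminate]. }
    { intros y Hy; apply in_seq in Hy; apply Ha; lia. }
    apply in_seq in Hs. fold (amax n a) in Hs'.
    set (c := map (fun j => (j * s) mod n)%nat (seq 0 n)).
    assert (Hcl : length c = n) by (unfold c; rewrite length_map, length_seq; auto).
    assert (Hnth : forall j, (j < n)%nat -> nth j c 0%nat = ((j * s) mod n)%nat).
    { intros j Hj. unfold c. rewrite (nth_indep _ _ ((fun j => (j * s) mod n)%nat 0%nat)) by (rewrite length_map, length_seq; auto).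
      rewrite (map_nth (fun j => (j * s) mod n)%nat). rewrite seq_nth by auto. auto. }
    assert (Hw : cycle_weight (Circ n a) c = amax n a ^ n).
    { unfold cycle_weight. rewrite Hcl. rewrite <- (length_seq n 0) at 3. rewrite <- (prod_const (amax n a) (seq 0 n)).
      f_equal. apply map_ext_in. intros j Hj. apply in_seq in Hj. rewrite !Hnth by (try apply Nat.mod_upper_bound; lia).
      unfold Circ. rewrite Hs'. f_equal.
      rewrite Nat.Div0.mul_mod_idemp_l. replace ((j + 1) * s)%nat with (j * s + s)%nat by lia.
      apply modL3; lia. }
    rewrite <- (geo_pow (amax n a) n) by auto. rewrite <- Hw. unfold lambda.
    apply rmaxl_ge'. apply in_flat_map. exists n. split; [apply in_seq; lia|].
    apply in_map_iff. exists c. split; auto. apply in_all_lists. split; auto.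
    unfold c. apply Forall_forall. intros y Hy. apply in_map_iff in Hy as [j [<- _]]. apply Nat.mod_upper_bound; lia.
Qed.

Lemma pigeon (f : nat -> nat) n m : (n <= m)%nat -> (forall k, (k <= m)%nat -> (f k < n)%nat) ->
  exists i j, (i < j <= m)%nat /\ f i = f j.
Proof.
  intros Hnm Hf. apply NNPP. intros Hc.
  assert (Hnd : NoDup (map f (seq 0 (S m)))).
  { apply NoDup_map_NoDup_ForallPairs; [|apply seq_NoDup].
    intros a b Ha Hb Hab. apply in_seq in Ha, Hb.
    destruct (lt_eq_lt_dec a b) as [[H|H]|H]; auto.
    - exfalso; apply Hc; exists a, b; split; [lia|auto].
    - exfalso; apply Hc; exists b, a; split; [lia|auto]. }
  assert (Hi : incl (map f (seq 0 (S m))) (seq 0 n)).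
  { intros y Hy. apply in_map_iff in Hy as [k [<- Hk]]. apply in_seq in Hk. apply in_seq. specialize (Hf k). lia. }
  pose proof (NoDup_incl_length Hnd Hi). rewrite length_map, !length_seq in H. lia.
Qed.

Lemma sm_app l1 l2 : sm (l1 ++ l2) = (sm l1 + sm l2)%nat.
Proof. induction l1; simpl; auto. rewrite IHl1; lia. Qed.

Lemma wt_app e l1 l2 : wt e (l1 ++ l2) = wt e l1 * wt e l2.
Proof. induction l1; simpl; [ring|]. rewrite IHl1; ring. Qed.

Lemma sm_repeat c k : sm (repeat c k) = (k * c)%nat.
Proof. induction k; simpl; auto. Qed.

Lemma wt_repeat e c k : wt e (repeat c k) = e c ^ k.
Proof. induction k; simpl; auto. rewrite IHk; ring. Qed.

Lemma wt_bound n e nu l : (forall s, (s < n)%nat -> 0 <= e s <= nu) -> Forall (fun s => (s < n)%nat) l ->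
  wt e l <= nu ^ length l.
Proof.
  intros He; induction 1; simpl; [lra|]. destruct (He x H).
  apply Rmult_le_compat; auto. eapply wt_nonneg; eauto. intros s Hs; apply He; auto.
Qed.

Lemma exch n e nu c0 l : (0 < n)%nat -> (c0 < n)%nat -> (forall s, (s < n)%nat -> 0 <= e s <= nu) -> e c0 = nu ->
  Forall (fun s => (s < n)%nat) l -> (n <= length l)%nat ->
  exists l', length l' = pred (length l) /\ Forall (fun s => (s < n)%nat) l' /\
    wt e l <= nu * wt e l' /\ forall i, ((i + sm l) mod n = ((i + c0) mod n + sm l') mod n)%nat.
Proof.
  intros Hn Hc0 He Hec Hl Hlen.
  assert (Hnn : nnd n e) by (intros s Hs; apply He; auto).
  destruct (pigeon (fun k => (sm (firstn k l) + k * (n - c0)) mod n)%nat n (length l)) as [i [j [Hij Hf]]]; auto.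
  { intros; apply Nat.mod_upper_bound; lia. }
  set (l1 := firstn i l). set (r := skipn i l). set (l2 := firstn (j - i) r). set (l3 := skipn (j - i) r).
  assert (E1 : l = l1 ++ l2 ++ l3) by (unfold l1, l2, l3, r; rewrite !firstn_skipn; auto).
  assert (L1 : length l1 = i) by (unfold l1; apply firstn_length_le; lia).
  assert (L2 : length l2 = (j - i)%nat) by (unfold l2, r; rewrite firstn_length_le; auto; rewrite length_skipn; lia).
  assert (Ej : firstn j l = l1 ++ l2).
  { rewrite E1. replace j with (length l1 + (j - i))%nat at 1 by lia. rewrite firstn_app_2.
    f_equal. rewrite firstn_app, L2, Nat.sub_diag, firstn_O, app_nil_r. rewrite <- L2, firstn_all. auto. }
  assert (Ei : firstn i l = l1) by auto.
  rewrite Ej, Ei in Hf.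
  rewrite E1 in Hl. apply Forall_app in Hl as [F1 Hl]. apply Forall_app in Hl as [F2 F3].
  exists (l1 ++ repeat c0 (j - i - 1) ++ l3). split; [|split; [|split]].
  - rewrite E1, !length_app, repeat_length. lia.
  - apply Forall_app; split; auto. apply Forall_app; split; auto. apply Forall_forall; intros y Hy.
    apply repeat_spec in Hy; lia.
  - rewrite E1, !wt_app, wt_repeat, Hec.
    pose proof (wt_bound n e nu l2 He F2). rewrite L2 in H.
    pose proof (wt_nonneg n e l1 Hnn F1). pose proof (wt_nonneg n e l3 Hnn F3).
    replace (j - i)%nat with (S (j - i - 1)) in H by lia. simpl in H.
    apply Rle_trans with (wt e l1 * (nu * nu ^ (j - i - 1) * wt e l3)); [|right; ring].
    apply Rmult_le_compat_l; auto. apply Rmult_le_compat_r; auto.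
  - intros i0. rewrite Nat.Div0.add_mod_idemp_l. rewrite E1, !sm_app, sm_repeat. rewrite sm_app in Hf.
    apply modZ; auto.
    assert (Hf' : ((sm l1 + sm l2 + j * (n - c0)) mod n = (sm l1 + i * (n - c0)) mod n)%nat) by auto.
    apply Nat2Z.inj_iff in Hf'. rewrite !Nat2Z.inj_mod in Hf'.
    assert (Hdiv : (Z.of_nat n | Z.of_nat (sm l1 + sm l2 + j * (n - c0)) - Z.of_nat (sm l1 + i * (n - c0)))%Z).
    { apply Z.mod_divide; [lia|]. rewrite Zminus_mod, Hf', Z.sub_diag. apply Z.mod_0_l. lia. }
    destruct Hdiv as [q Hq].
    exists (q - Z.of_nat (j - i))%Z.
    rewrite !Nat2Z.inj_add, !Nat2Z.inj_mul, !Nat2Z.inj_sub in * by lia.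
    nia.
Qed.

Definition xnn n (x : vec) := forall k, (k < n)%nat -> 0 <= x k.

Lemma xmod n (x : vec) i : (0 < n)%nat -> xnn n x -> 0 <= x (i mod n)%nat.
Proof. intros Hn Hx; apply Hx, Nat.mod_upper_bound; lia. Qed.

Lemma lemK n e nu c0 x t : (0 < n)%nat -> (c0 < n)%nat -> (forall s, (s < n)%nat -> 0 <= e s <= nu) -> e c0 = nu ->
  xnn n x -> (n <= S t)%nat -> forall i, P n e (S t) x i = nu * P n e t x ((i + c0) mod n)%nat.
Proof.
  intros Hn Hc0 He Hec Hx Ht i.
  assert (Hnn : nnd n e) by (intros s Hs; apply He; auto).
  assert (Hnu : 0 <= nu) by (rewrite <- Hec; apply He; auto).
  apply Rle_antisym.
  - unfold P at 1. apply rmaxl_le; [apply Rmult_le_pos; auto; apply P_nonneg|].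
    intros l Hl. apply in_all_lists in Hl as [Hl1 Hl2].
    destruct (exch n e nu c0 l Hn Hc0 He Hec Hl2 ltac:(lia)) as [l' [H1 [H2 [H3 H4]]]].
    rewrite H4. apply Rle_trans with (nu * (wt e l' * x (((i + c0) mod n + sm l') mod n)%nat)).
    + rewrite <- Rmult_assoc. apply Rmult_le_compat_r; auto. apply xmod; auto.
    + apply Rmult_le_compat_l; auto. unfold P.
      apply (rmaxl_ge (fun l => wt e l * x (((i + c0) mod n + sm l) mod n)%nat)).
      apply in_all_lists. split; auto. lia.
  - rewrite P_step by auto. rewrite <- Hec.
    apply (rmaxl_ge (fun s => e s * P n e t x ((i + s) mod n)%nat)). apply in_seq; lia.
Qed.

Lemma P_zero n e t x i : (forall s, (s < n)%nat -> e s = 0) -> P n e (S t) x i = 0.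
Proof.
  intros He. assert (nnd n e) by (intros s Hs; rewrite He; auto; lra).
  rewrite P_step by auto. apply Rle_antisym; [|apply rmaxl_nonneg].
  apply rmaxl_le; [lra|]. intros s Hs. apply in_seq in Hs. rewrite He by lia. lra.
Qed.

Lemma P_mono_x n e t (y y' : vec) i : (0 < n)%nat -> nnd n e -> (forall j, (j < n)%nat -> y j <= y' j) ->
  P n e t y i <= P n e t y' i.
Proof.
  intros Hn He H. apply rmaxl_mono. intros l Hl. apply in_all_lists in Hl as [_ Hl].
  apply Rmult_le_compat_l; [eapply wt_nonneg; eauto|]. apply H, Nat.mod_upper_bound; lia.
Qed.

Lemma P_scal_x n e t (y : vec) c i : 0 <= c -> P n e t (fun j => c * y j) i = c * P n e t y i.
Proof.
  intros Hc. unfold P. rewrite rmaxl_scal by auto. apply rmaxl_ext; intros; ring.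
Qed.

Lemma P_shift_x n e t (y : vec) m i : P n e t (fun j => y ((j + m) mod n)%nat) i = P n e t y ((i + m) mod n)%nat.
Proof.
  unfold P. apply rmaxl_ext. intros l _. f_equal. f_equal.
  rewrite Nat.Div0.add_mod_idemp_l, Nat.Div0.add_mod_idemp_l. f_equal. lia.
Qed.

Lemma P_zero_t n e x i : (0 < n)%nat -> xnn n x -> P n e 0 x i = x (i mod n)%nat.
Proof.
  intros Hn Hx. unfold P. simpl. rewrite Nat.add_0_r, Rmult_1_l. apply Rmax_left. apply xmod; auto.
Qed.

Lemma P_semi n e x t : (0 < n)%nat -> nnd n e -> xnn n x ->
  forall N i, P n e N (P n e t x) i = P n e (N + t) x i.
Proof.
  intros Hn He Hx. induction N; intros i.
  - rewrite P_zero_t; auto. simpl. apply P_mod. intros k _; apply P_nonneg.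
  - simpl. rewrite !P_step by auto. apply rmaxl_ext. intros s _. rewrite IHN. auto.
Qed.

Lemma wt_compare n a b mu la l : 0 <= mu -> 0 <= la -> nnd n a -> nnd n b ->
  (forall s, (s < n)%nat -> mu * a s <= la * b s) -> Forall (fun s => (s < n)%nat) l ->
  mu ^ length l * wt a l <= la ^ length l * wt b l.
Proof.
  intros Hmu Hla Ha Hb H. induction 1; simpl; [lra|].
  replace (mu * mu ^ length l * (a x * wt a l)) with ((mu * a x) * (mu ^ length l * wt a l)) by ring.
  replace (la * la ^ length l * (b x * wt b l)) with ((la * b x) * (la ^ length l * wt b l)) by ring.
  apply Rmult_le_compat; auto.
  - apply Rmult_le_pos; auto.
  - apply Rmult_le_pos; [apply pow_le; auto| eapply wt_nonneg; eauto].
Qed.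

Lemma P_compare n a b mu la t x i : (0 < n)%nat -> 0 <= mu -> 0 <= la -> nnd n a -> nnd n b -> xnn n x ->
  (forall s, (s < n)%nat -> mu * a s <= la * b s) ->
  mu ^ t * P n a t x i <= la ^ t * P n b t x i.
Proof.
  intros Hn Hmu Hla Ha Hb Hx H. unfold P. rewrite !rmaxl_scal by (apply pow_le; auto).
  apply rmaxl_mono. intros l Hl. apply in_all_lists in Hl as [Hl1 Hl2].
  rewrite <- !Rmult_assoc. apply Rmult_le_compat_r; [apply xmod; auto|]. rewrite <- Hl1.
  eapply wt_compare; eauto.
Qed.

Lemma P_lower n a c0 t x i : (c0 < n)%nat -> a c0 ^ t * x ((i + t * c0) mod n)%nat <= P n a t x i.
Proof.
  intros Hc. unfold P. rewrite <- wt_repeat, <- sm_repeat.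
  apply (rmaxl_ge (fun l => wt a l * x ((i + sm l) mod n)%nat)). apply in_all_lists.
  split; [apply repeat_length|]. apply Forall_forall; intros y Hy; apply repeat_spec in Hy; lia.
Qed.

Lemma Kiter n e nu c0 x N : (0 < n)%nat -> (c0 < n)%nat -> (forall s, (s < n)%nat -> 0 <= e s <= nu) -> e c0 = nu ->
  xnn n x -> (n <= S N)%nat -> forall k i, P n e (N + k) x i = nu ^ k * P n e N x ((i + k * c0) mod n)%nat.
Proof.
  intros Hn Hc0 He Hec Hx HN. induction k; intros i.
  - rewrite Nat.add_0_r, Nat.mul_0_l, Nat.add_0_r, P_mod. simpl; ring.
  - replace (N + S k)%nat with (S (N + k)) by lia. rewrite (lemK n e nu c0) by (auto; lia).
    rewrite IHk. rewrite Nat.Div0.add_mod_idemp_l. simpl. rewrite <- Rmult_assoc. f_equal. f_equal. f_equal. lia.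
Qed.

Lemma in_itv_bounds I v : in_itv I v -> lo I <= v <= hi I.
Proof. unfold in_itv. destruct (lc I), (rc I); intros [H1 H2]; lra. Qed.

Theorem theorem4 (n : nat) (X : nat -> itv) (ia : nat -> itv)
  (hX : forall i, (i < n)%nat -> itv_ok (X i))
  (hia : forall t, (t < n)%nat -> itv_ok (ia t))
  (hhat : forall t, (t < n)%nat -> in_itv (ia t) (hat_a n ia t)) :
  weakly_tolerance_robust n ia X <->
  exists x : vec, in_box n X x /\
    forall i, (i < n)%nat ->
      lambda n (hatA n ia) * mvec n (mpow n (hatA n ia) (n * n)) x i
      = mvec n (mpow n (hatA n ia) (S (n * n))) x i.
Proof.
  split.
  - intros [a [Ha [x [Hbox [Hx [T HT]]]]]].
    exists x. split; auto. intros i Hi.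
    assert (Hn : (0 < n)%nat) by lia.
    assert (Hain : forall t, (t < n)%nat -> lo (ia t) <= a t <= hi (ia t)) by (intros; apply in_itv_bounds; auto).
    assert (Hlo : forall t, (t < n)%nat -> 0 <= lo (ia t)) by (intros t Ht; apply hia; auto).
    assert (Ha0 : nnd n a) by (intros t Ht; specialize (Hain t Ht); specialize (Hlo t Ht); lra).
    set (b := hat_a n ia). set (mu := lo_max n ia).
    assert (Hmu0 : 0 <= mu) by apply rmaxl_nonneg.
    assert (Hbmu : forall s, (s < n)%nat -> 0 <= b s <= mu).
    { intros s Hs. unfold b, hat_a. fold mu. specialize (Hain s Hs); specialize (Hlo s Hs). split.
      - apply Rmin_glb; lra.
      - apply Rmin_l. }
    assert (Hb0 : nnd n b) by (intros s Hs; apply Hbmu; auto).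
    unfold hatA. fold b.
    rewrite !(link n b x) by auto.
    rewrite lambda_circ by auto.
    set (N := (n * n)%nat).
    destruct (Req_dec mu 0) as [Hm0|Hmpos].
    + assert (Hbz : forall s, (s < n)%nat -> b s = 0).
      { intros s Hs. specialize (Hbmu s Hs). lra. }
      replace N with (S (N - 1)) by (unfold N; nia).
      rewrite !P_zero by auto. ring.
    + assert (Hmu : 0 < mu) by lra.
      assert (HT' : forall j, (j < n)%nat -> P n a (S T) x j = amax n a * P n a T x j).
      { intros j Hj. rewrite <- !(link n a x) by auto. rewrite <- lambda_circ by auto. apply HT; auto. }
      set (la := amax n a) in *.
      destruct (rmaxl_attain (fun k => lo (ia k)) (seq 0 n)) as [k [Hk Hkmu]].
      { destruct n; [lia|discriminate]. }
      { intros y Hy; apply in_seq in Hy; apply Hlo; lia. }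
      apply in_seq in Hk. fold (lo_max n ia) in Hkmu. fold mu in Hkmu.
      assert (Hakla : a k <= la) by (apply rmaxl_ge; apply in_seq; lia).
      assert (Hla_mu : mu <= la) by (specialize (Hain k ltac:(lia)); lra).
      assert (Hla : 0 < la) by lra.
      destruct (rmaxl_attain a (seq 0 n)) as [c0 [Hc0 Hac0]].
      { destruct n; [lia|discriminate]. }
      { intros y Hy; apply in_seq in Hy; apply Ha0; lia. }
      apply in_seq in Hc0. fold (amax n a) in Hac0. fold la in Hac0. symmetry in Hac0.
      assert (Hc0n : (c0 < n)%nat) by lia.
      assert (Hbc0 : b c0 = mu).
      { unfold b, hat_a. fold mu. apply Rmin_left. specialize (Hain c0 Hc0n). lra. }
      assert (Hea : forall s, (s < n)%nat -> 0 <= a s <= la).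
      { intros s Hs. split; [apply Ha0; auto|]. apply rmaxl_ge; apply in_seq; lia. }
      assert (Hamb : amax n b = mu).
      { apply Rle_antisym.
        - apply rmaxl_le; auto. intros y Hy; apply in_seq in Hy; apply Hbmu; lia.
        - rewrite <- Hbc0. apply rmaxl_ge; apply in_seq; lia. }
      rewrite Hamb.
      assert (Hcmp : forall s, (s < n)%nat -> mu * a s <= la * b s).
      { intros s Hs. specialize (Hea s Hs). specialize (Hain s Hs). unfold b, hat_a. fold mu.
        destruct (Rle_dec mu (hi (ia s))).
        - rewrite Rmin_left by auto. nra.
        - rewrite Rmin_right by lra. nra. }
      assert (Hbump : forall m j, (j < n)%nat -> P n a (S (T + m)) x j = la * P n a (T + m) x j).
      { induction m; intros j Hj.
        - rewrite Nat.add_0_r. auto.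
        - replace (T + S m)%nat with (S (T + m)) by lia.
          rewrite (P_step n a (S (T + m))) by auto. rewrite (P_step n a (T + m)) by auto.
          rewrite rmaxl_scal by lra. apply rmaxl_ext. intros s _.
          rewrite IHm by (apply Nat.mod_upper_bound; lia). ring. }
      set (T' := (T + n)%nat).
      set (z := P n a T' x).
      assert (Hz : forall j, z j = z ((j + c0) mod n)%nat).
      { intros j. unfold z. rewrite <- (P_mod n a T' x j).
        assert (Hjn : (j mod n < n)%nat) by (apply Nat.mod_upper_bound; lia).
        pose proof (Hbump n (j mod n)%nat Hjn) as Hb1. fold T' in Hb1.
        rewrite (lemK n a la c0 x T') in Hb1 by (auto; unfold T'; lia).
        rewrite Nat.Div0.add_mod_idemp_l in Hb1.
        apply Rmult_eq_reg_l with la; lra. }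
      set (Y := P n b N x).
      assert (HNn : (n <= S N)%nat) by (unfold N; nia).
      assert (KB : forall k j, P n b (N + k) x j = mu ^ k * Y ((j + k * c0) mod n)%nat).
      { intros; apply (Kiter n b mu c0 x N); auto. }
      assert (Up : forall j, P n b N z j <= la ^ T' * Y ((j + T' * c0) mod n)%nat).
      { intros j. assert (Hp : 0 < mu ^ T') by (apply pow_lt; auto).
        apply Rmult_le_reg_l with (mu ^ T'); auto.
        rewrite <- P_scal_x by lra.
        apply Rle_trans with (P n b N (fun j => la ^ T' * P n b T' x j) j).
        - apply P_mono_x; auto. intros j' _. unfold z. apply P_compare; auto; lra.
        - rewrite P_scal_x by (apply pow_le; lra). rewrite P_semi by auto. rewrite KB. right; ring. }
      assert (Lo : forall j, la ^ T' * Y ((j + T' * c0) mod n)%nat <= P n b N z j).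
      { intros j. unfold Y. rewrite <- P_shift_x. rewrite <- P_scal_x by (apply pow_le; lra).
        apply P_mono_x; auto. intros j' _. unfold z. rewrite <- Hac0. apply P_lower; auto. }
      assert (Sh : forall j, P n b N z j = P n b N z ((j + c0) mod n)%nat).
      { intros j. rewrite <- P_shift_x. unfold P. apply rmaxl_ext. intros l _. rewrite <- Hz. auto. }
      assert (HY : forall j, Y ((j + T' * c0) mod n)%nat = Y (((j + c0) mod n + T' * c0) mod n)%nat).
      { intros j. assert (Hp : 0 < la ^ T') by (apply pow_lt; auto).
        apply Rmult_eq_reg_l with (la ^ T'); [|lra].
        transitivity (P n b N z j).
        - apply Rle_antisym; auto.
        - rewrite Sh. apply Rle_antisym; auto. }
      assert (HYi : Y i = Y ((i + c0) mod n)%nat).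
      { pose proof (Nat.div_mod_eq (T' * c0) n) as Hdm.
        set (r := ((T' * c0) mod n)%nat) in *. set (q := ((T' * c0) / n)%nat) in *.
        assert (Hr : (r < n)%nat) by (apply Nat.mod_upper_bound; lia).
        specialize (HY (i + (n - r))%nat). rewrite Nat.Div0.add_mod_idemp_l in HY.
        replace (i + (n - r) + T' * c0)%nat with (i + S q * n)%nat in HY by lia.
        replace (i + (n - r) + c0 + T' * c0)%nat with (i + c0 + S q * n)%nat in HY by lia.
        rewrite !Nat.Div0.mod_add, Nat.mod_small in HY by lia. auto. }
      rewrite (lemK n b mu c0 x N) by auto. fold Y. rewrite <- HYi. auto.
  - intros [x [Hbox Heq]]. exists (hat_a n ia). split; [exact hhat|]. exists x. split; auto. split.
    + intros k Hk. pose proof (in_itv_bounds _ _ (Hbox k Hk)). destruct (hX k Hk). lra.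
    + exists (n * n)%nat. intros i Hi. symmetry. apply Heq; auto.
Qed.
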